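(* Let $\mathcal{N}$ be the Noperthedron. For all $\theta,\varphi,\alpha\in\mathbb{R}$ the following equalities of sets hold: \[ M(\theta+2\pi/15,\varphi)\mathcal{N}=M(\theta,\varphi)\mathcal{N},\qquad R(\alpha+\pi)M(\theta,\varphi)\mathcal{N}=R(\alpha)M(\theta,\varphi)\mathcal{N}, \] \[ \begin{pmatrix}1&0\\0&-1\end{pmatrix}M(\theta,\varphi)\mathcal{N}=M(\theta+\pi/15,\pi-\varphi)\mathcal{N}. \]
   Context: $R(\alpha)=\begin{pmatrix}\cos\alpha&-\sin\alpha\\ \sin\alpha&\cos\alpha\end{pmatrix}$, $M(\theta,\varphi)=\begin{pmatrix}-\sin\theta&\cos\theta&0\\ -\cos\theta\cos\varphi&-\sin\theta\cos\varphi&\sin\varphi\end{pmatrix}$, acting elementwise on point sets. Let $R_z(\beta)=\begin{pmatrix}\cos\beta&-\sin\beta&0\\ \sin\beta&\cos\beta&0\\0&0&1\end{pmatrix}$, $\mathcal{C}_{30}=\{(-1)^\ell R_z(2\pi k/15): k=0,\dots,14,\ \ell=0,1\}$, $C_1=\frac{1}{259375205}(152024884,0,210152163)^t$, $C_2=10^{-10}(6632738028,6106948881,3980949609)^t$, $C_3=10^{-10}(8193990033,5298215096,1230614493)^t$, and $\mathcal{N}=\mathcal{C}_{30}C_1\cup\mathcal{C}_{30}C_2\cup\mathcal{C}_{30}C_3$. *)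

(* Defs.v *)
From HB Require Import structures.
From mathcomp Require Import all_boot all_order all_algebra.
From mathcomp Require Import classical_sets reals trigo.
From mathcomp Require Import ssrZ.
From Stdlib Require Import ZArith.
Set Implicit Arguments. Unset Strict Implicit. Unset Printing Implicit Defensive.
Import Order.TTheory GRing.Theory Num.Theory.
Local Open Scope ring_scope.
Local Open Scope classical_set_scope.

Section Noperthedron.
Variable R : realType.

Definition zR (z : Z) : R := (int_of_Z z)%:~R.

Definition mxs (m n : nat) (s : seq (seq R)) : 'M[R]_(m, n) :=
  \matrix_(i < m, j < n) nth 0 (nth [::] s i) j.

Definition Rot2 (a : R) : 'M[R]_2 :=
  mxs 2 2 [:: [:: cos a; - sin a]; [:: sin a; cos a]].

Definition Mproj (th ph : R) : 'M[R]_(2, 3) :=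
  mxs 2 3 [:: [:: - sin th; cos th; 0];
              [:: - cos th * cos ph; - sin th * cos ph; sin ph]].

Definition Rz (b : R) : 'M[R]_3 :=
  mxs 3 3 [:: [:: cos b; - sin b; 0]; [:: sin b; cos b; 0]; [:: 0; 0; 1]].

Definition Flip : 'M[R]_2 := mxs 2 2 [:: [:: 1; 0]; [:: 0; -1]].

Definition C30 : set 'M[R]_3 :=
  [set A | exists (k : 'I_15) (l : 'I_2),
     A = (-1) ^+ l *: Rz (2 * pi * (k : nat)%:R / 15)].

Definition C1 : 'cV[R]_3 :=
  (zR 259375205)^-1 *: mxs 3 1 [:: [:: zR 152024884]; [:: 0]; [:: zR 210152163]].
Definition C2 : 'cV[R]_3 :=
  (zR 10000000000)^-1 *:
    mxs 3 1 [:: [:: zR 6632738028]; [:: zR 6106948881]; [:: zR 3980949609]].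
Definition C3 : 'cV[R]_3 :=
  (zR 10000000000)^-1 *:
    mxs 3 1 [:: [:: zR 8193990033]; [:: zR 5298215096]; [:: zR 1230614493]].

Definition Noperthedron : set 'cV[R]_3 :=
  [set A *m C1 | A in C30] `|` [set A *m C2 | A in C30] `|`
  [set A *m C3 | A in C30].

End Noperthedron.

(* Main.v *)
Require Import Defs.
From HB Require Import structures.
From mathcomp Require Import all_boot all_order all_algebra.
From mathcomp Require Import classical_sets reals trigo.
From mathcomp Require Import ring lra zify.
Import Order.TTheory GRing.Theory Num.Theory.
Local Open Scope ring_scope.
Local Open Scope classical_set_scope.

Section S.
Variable R : realType.


Lemma RzD (a b : R) : Rz a *m Rz b = Rz (a + b).
Proof.
rewrite /Rz /mxs; apply/matrixP => i j; rewrite !mxE !big_ord_recr big_ord0 /= !mxE /=.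
case: i => [[|[|[|i]]] Hi] //=; case: j => [[|[|[|j]]] Hj] //=;
 rewrite ?cosD ?sinD; ring.
Qed.

Lemma Rz2pi (a : R) : Rz (a + pi *+ 2) = Rz a.
Proof. by rewrite /Rz cosD2pi sinD2pi. Qed.

Lemma Rz0 : Rz 0 = 1 :> 'M[R]_3.
Proof.
rewrite /Rz /mxs; apply/matrixP => i j; rewrite !mxE cos0 sin0.
case: i => [[|[|[|i]]] Hi] //=; case: j => [[|[|[|j]]] Hj] //=; rewrite ?oppr0 //.
Qed.

Lemma MRz (th ph c : R) : Mproj th ph *m Rz c = Mproj (th - c) ph.
Proof.
rewrite /Rz /Mproj /mxs; apply/matrixP => i j; rewrite !mxE !big_ord_recr big_ord0 /= !mxE /=.
case: i => [[|[|i]] Hi] //=; case: j => [[|[|[|j]]] Hj] //=;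
 rewrite ?cosB ?sinB; ring.
Qed.


Definition ang (k : nat) : R := 2 * pi * k%:R / 15.

Lemma angD (k k' : nat) : (k < 15)%N -> (k' < 15)%N -> Rz (ang k + ang k') = Rz (ang ((k + k') %% 15)).
Proof.
move=> h1 h2; rewrite /ang.
have [hk|hk] := leqP 15 (k + k').
- have -> : ((k + k') %% 15 = (k + k') - 15)%N.
    lia.
  rewrite -(Rz2pi (2 * pi * (k + k' - 15)%:R / 15)); congr Rz.
  by rewrite natrB // natrD; field.
- rewrite (modn_small hk) natrD; congr Rz; ring.
Qed.

Lemma C30M (g h : 'M[R]_3) : C30 g -> C30 h -> C30 (g *m h).
Proof.
move=> [k [l ->]] [k' [l' ->]].
exists (Ordinal (ltn_pmod (k + k') (isT : (0 < 15)%N))).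
exists (Ordinal (ltn_pmod (l + l') (isT : (0 < 2)%N))).
rewrite -scalemxAl -scalemxAr scalerA RzD -exprD /= modn2 signr_odd.
congr (_ *: _); exact: (angD _ _ (ltn_ord k) (ltn_ord k')).
Qed.

Lemma C30inv (g : 'M[R]_3) : C30 g -> exists2 g', C30 g' & g *m g' = 1.
Proof.
move=> [k [l ->]]; rewrite -/(ang k).
exists ((-1) ^+ l *: Rz (ang ((15 - k) %% 15))).
  by exists (Ordinal (ltn_pmod (15 - k) (isT : (0 < 15)%N))), l.
rewrite -scalemxAl -scalemxAr scalerA RzD -exprD -signr_odd addnn odd_double expr0 scale1r.
rewrite (angD _ _ (ltn_ord k) (ltn_pmod (15 - k) (isT : (0 < 15)%N))).
have -> : ((k + (15 - k) %% 15) %% 15 = 0)%N by have := ltn_ord k; lia.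
by rewrite /ang mulr0 mul0r Rz0.
Qed.

Lemma img_comp m n p (A : 'M[R]_(m, n)) (B : 'M[R]_(n, p)) (S : set 'cV[R]_p) :
  mulmx A @` (mulmx B @` S) = mulmx (A *m B) @` S.
Proof.
apply/seteqP; split => x.
- by move=> [y [z hz <-] <-]; exists z => //; rewrite mulmxA.
- by move=> [z hz <-]; exists (B *m z); [exists z | rewrite mulmxA].
Qed.

Lemma C30v (g : 'M[R]_3) (v : 'cV[R]_3) : C30 g ->
  mulmx g @` [set A *m v | A in @C30 R] = [set A *m v | A in @C30 R].
Proof.
move=> hg; apply/seteqP; split => x.
- move=> [y [A hA <-] <-]; exists (g *m A); [exact: C30M | by rewrite mulmxA].
- move=> [A hA <-]; have [g' hg' gg'] := C30inv g hg.
  exists (g' *m A *m v); first by exists (g' *m A) => //; exact: C30M.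
  by rewrite !mulmxA gg' mul1mx.
Qed.

Lemma C30N' (g : 'M[R]_3) (v1 v2 v3 : 'cV[R]_3) : C30 g ->
  mulmx g @` ([set A *m v1 | A in @C30 R] `|` [set A *m v2 | A in @C30 R] `|`
  [set A *m v3 | A in @C30 R]) =
  [set A *m v1 | A in @C30 R] `|` [set A *m v2 | A in @C30 R] `|`
  [set A *m v3 | A in @C30 R].
Proof. by move=> hg; rewrite !image_setU !C30v. Qed.

Lemma C30N (g : 'M[R]_3) : C30 g -> mulmx g @` (@Noperthedron R) = @Noperthedron R.
Proof. move=> hg; exact: (C30N' _ _ _ _ hg). Qed.


Lemma RotN (a : R) : Rot2 (a + pi) = - Rot2 a.
Proof.
rewrite /Rot2 /mxs; apply/matrixP => i j; rewrite !mxE cosDpi sinDpi.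
case: i => [[|[|i]] Hi] //=; case: j => [[|[|j]] Hj] //=; rewrite ?opprK //.
Qed.

Lemma FlipM (th ph : R) : Flip R *m Mproj th ph = - Mproj (th - pi) (pi - ph).
Proof.
rewrite /Flip /Mproj /mxs; apply/matrixP => i j; rewrite !mxE !big_ord_recr big_ord0 /= !mxE /=.
rewrite !sinB !cosB cospi sinpi.
case: i => [[|[|i]] Hi] //=; case: j => [[|[|[|j]]] Hj] //=; ring.
Qed.

End S.

Theorem lemma2p3 (R : realType) (th ph a : R) :
  [/\ mulmx (Mproj (th + 2 * pi / 15) ph) @` (@Noperthedron R)
        = mulmx (Mproj th ph) @` (@Noperthedron R),
      mulmx (Rot2 (a + pi)) @` (mulmx (Mproj th ph) @` (@Noperthedron R))
        = mulmx (Rot2 a) @` (mulmx (Mproj th ph) @` (@Noperthedron R))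
    & mulmx (@Flip R) @` (mulmx (Mproj th ph) @` (@Noperthedron R))
        = mulmx (Mproj (th + pi / 15) (pi - ph)) @` (@Noperthedron R)].
Proof.
split.
- have L1 : Mproj th ph = Mproj (th + 2 * pi / 15) ph *m Rz (ang R 1).
    by rewrite MRz /ang mulr1 addrK.
  rewrite [in RHS]L1 -img_comp C30N //.
  by exists (Ordinal (isT : (1 < 15)%N)), ord0; rewrite /= expr0 scale1r.
- have hG : C30 ((-1) ^+ 1 *: Rz (ang R 0)) by exists ord0, (Ordinal (isT : (1 < 2)%N)).
  have E : Rot2 (a + pi) *m Mproj th ph = Rot2 a *m Mproj th ph *m ((-1) ^+ 1 *: Rz (ang R 0)).
    by rewrite /ang mulr0 mul0r Rz0 expr1 scaleN1r mulmxN mulmx1 RotN mulNmx.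
  by rewrite img_comp E -img_comp (C30N _ _ hG) img_comp.
- have hG : C30 ((-1) ^+ 1 *: Rz (ang R 8)) by exists (Ordinal (isT : (8 < 15)%N)), (Ordinal (isT : (1 < 2)%N)).
  have E : Flip R *m Mproj th ph = Mproj (th + pi / 15) (pi - ph) *m ((-1) ^+ 1 *: Rz (ang R 8)).
    rewrite expr1 scaleN1r mulmxN MRz FlipM.
    have -> : th + pi / 15 - ang R 8 = th - pi by rewrite /ang; field.
    by [].
  by rewrite img_comp E -img_comp (C30N _ _ hG).
Qed.
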